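(* Let $p\in[1,\infty]$, $\alpha\in[0,1]$ irrational, $\theta\in[0,1)$ and $\lambda\in\mathbb{R}$. Then $\sigma(H_{\lambda,\alpha,0})=\sigma(\widetilde H_{\lambda,\alpha,\theta})=\sigma(H_{\lambda,\alpha,\theta})$.
   Context: $v_{\alpha,\theta}(n)=\chi_{[1-\alpha,1)}(n\alpha+\theta\bmod 1)$, $\widetilde v_{\alpha,\theta}(n)=\chi_{(1-\alpha,1]\cup\{0\}}(n\alpha+\theta\bmod 1)$; $(H_{\lambda,\alpha,\theta}x)_n=x_{n+1}+x_{n-1}+\lambda v_{\alpha,\theta}(n)x_n$ and $(\widetilde H_{\lambda,\alpha,\theta}x)_n=x_{n+1}+x_{n-1}+\lambda\widetilde v_{\alpha,\theta}(n)x_n$, as operators on $\ell^p(\mathbb{Z})$. *)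

(* Defs.v *)
From Stdlib Require Import Reals ZArith.
From Coquelicot Require Import Coquelicot.
Open Scope R_scope.

Definition seqZ := Z -> Coquelicot.Complex.C.

(* a^q for a >= 0, q > 0, with the convention 0^q = 0. *)
Definition pw (a q : R) : R :=
  if Req_EM_T a 0 then 0 else Rpower a q.

Definition psum (q : R) (x : seqZ) (N : nat) : R :=
  sum_f_R0 (fun k => pw (Cmod (x (Z.of_nat k - Z.of_nat N)%Z)) q) (2 * N).

Definition lp_le (p : Rbar) (x : seqZ) (M : R) : Prop :=
  match p with
  | Finite q => forall N, psum q x N <= pw M q
  | p_infty => forall n, Cmod (x n) <= M
  | m_infty => False
  end.

Definition in_lp (p : Rbar) (x : seqZ) : Prop := exists M, 0 <= M /\ lp_le p x M.

Definition bounded_op (p : Rbar) (G : seqZ -> seqZ) : Prop :=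
  (forall x, in_lp p x -> in_lp p (G x)) /\
  (forall x y (c : Coquelicot.Complex.C), in_lp p x -> in_lp p y ->
     G (fun n => Cplus (x n) (Cmult c (y n))) =
     (fun n => Cplus (G x n) (Cmult c (G y n)))) /\
  (exists K, 0 <= K /\ forall x M, 0 <= M -> lp_le p x M -> lp_le p (G x) (K * M)).

Definition spectrum (p : Rbar) (H : seqZ -> seqZ) (z : Coquelicot.Complex.C) : Prop :=
  ~ exists G : seqZ -> seqZ,
      bounded_op p G /\
      (forall x, in_lp p x -> G (fun n => Cminus (H x n) (Cmult z (x n))) = x) /\
      (forall x, in_lp p x -> (fun n => Cminus (H (G x) n) (Cmult z (G x n))) = x).

Definition frac1 (y : R) : R := y - IZR (Int_part y).

Definition v (alpha theta : R) (n : Z) : R :=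
  let y := frac1 (IZR n * alpha + theta) in
  if Rle_dec (1 - alpha) y then (if Rlt_dec y 1 then 1 else 0) else 0.

Definition vt (alpha theta : R) (n : Z) : R :=
  let y := frac1 (IZR n * alpha + theta) in
  if Rlt_dec (1 - alpha) y then (if Rle_dec y 1 then 1 else 0)
  else if Req_EM_T y 0 then 1 else 0.

Definition schr (lambda : R) (V : Z -> R) (x : seqZ) : seqZ :=
  fun n => Cplus (Cplus (x (n + 1)%Z) (x (n - 1)%Z)) (Cmult (RtoC (lambda * V n)) (x n)).

Definition H (lambda alpha theta : R) : seqZ -> seqZ := schr lambda (v alpha theta).
Definition Ht (lambda alpha theta : R) : seqZ -> seqZ := schr lambda (vt alpha theta).

Definition irrational (a : R) : Prop :=
  ~ exists (m k : Z), k <> 0%Z /\ a * IZR k = IZR m.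

(* Main.v *)
Require Import Defs.
From Stdlib Require Import Reals ZArith Lia Lra ClassicalEpsilon FunctionalExtensionality.
From Coquelicot Require Import Coquelicot.
Open Scope R_scope.


Lemma Rpower_pos' a q : 0 < Rpower a q.
Proof. unfold Rpower; apply exp_pos. Qed.

Lemma pw_nonneg a q : 0 <= pw a q.
Proof. unfold pw; destruct Req_EM_T; [lra| left; apply Rpower_pos']. Qed.

Lemma pw_0 q : pw 0 q = 0.
Proof. unfold pw; destruct Req_EM_T; [reflexivity| lra]. Qed.

Lemma pw_pos a q : 0 < a -> pw a q = Rpower a q.
Proof. intros; unfold pw; destruct Req_EM_T; [lra| reflexivity]. Qed.

Lemma pw_le a b q : 0 < q -> 0 <= a <= b -> pw a q <= pw b q.
Proof.
  intros Hq [Ha Hab]. destruct (Req_dec a 0) as [->|Ha0].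
  - rewrite pw_0; apply pw_nonneg.
  - rewrite !pw_pos by lra. apply Rle_Rpower_l; lra.
Qed.

Lemma pw_lt a b q : 0 < q -> 0 <= a < b -> pw a q < pw b q.
Proof.
  intros Hq [Ha Hab]. destruct (Req_dec a 0) as [->|Ha0].
  - rewrite pw_0, pw_pos by lra; apply Rpower_pos'.
  - rewrite !pw_pos by lra. apply Rlt_Rpower_l; lra.
Qed.

Lemma pw_le_inv a b q : 0 < q -> 0 <= a -> 0 <= b -> pw a q <= pw b q -> a <= b.
Proof.
  intros Hq Ha Hb H. destruct (Rle_or_lt a b) as [h|h]; auto.
  pose proof (pw_lt b a q Hq (conj Hb h)); lra.
Qed.

Lemma pw_mult a b q : 0 <= a -> 0 <= b -> pw (a*b) q = pw a q * pw b q.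
Proof.
  intros Ha Hb. destruct (Req_dec a 0) as [->|Ha0].
  { rewrite Rmult_0_l, pw_0; ring. }
  destruct (Req_dec b 0) as [->|Hb0].
  { rewrite Rmult_0_r, pw_0; ring. }
  assert (0 < a*b) by (apply Rmult_lt_0_compat; lra).
  rewrite !pw_pos by lra. rewrite Rpower_mult_distr; lra.
Qed.

Lemma pw_max a b q : pw (Rmax a b) q <= pw a q + pw b q.
Proof.
  pose proof (pw_nonneg a q); pose proof (pw_nonneg b q).
  apply Rmax_case_strong; intros; lra.
Qed.

Lemma pw_2 q : 1 <= q -> 2 <= pw 2 q.
Proof.
  intros Hq. rewrite pw_pos by lra.
  rewrite <- (Rpower_1 2) at 1 by lra. apply Rle_Rpower; lra.
Qed.

Lemma pw_small a q : 1 <= q -> 0 <= a <= 1 -> pw a q <= a.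
Proof.
  intros Hq [Ha Ha1]. destruct (Req_dec a 0) as [->|Ha0].
  - rewrite pw_0; lra.
  - rewrite pw_pos by lra. rewrite <- (Rpower_1 a) at 2 by lra.
    unfold Rpower.
    assert (ln a <= 0).
    { rewrite <- ln_1. destruct (Req_dec a 1) as [->|]; [lra|].
      left; apply ln_increasing; lra. }
    destruct (Req_dec (q * ln a) (1 * ln a)) as [E|E]; [rewrite E; lra|].
    left; apply exp_increasing. nra.
Qed.

Lemma pw_cont (u : nat -> R) a q : 1 <= q -> (forall j, 0 <= u j) -> 0 <= a ->
  Un_cv u a -> Un_cv (fun j => pw (u j) q) (pw a q).
Proof.
  intros Hq Hu Ha Hcv. destruct (Req_dec a 0) as [->|Ha0].
  - intros eps Heps. destruct (Hcv (Rmin eps 1)) as [J HJ].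
    { apply Rmin_pos; lra. }
    exists J; intros j Hj. specialize (HJ j Hj). unfold R_dist in *.
    rewrite pw_0. rewrite Rminus_0_r in *. pose proof (Hu j).
    rewrite Rabs_right in HJ by lra.
    pose proof (Rmin_l eps 1); pose proof (Rmin_r eps 1).
    pose proof (pw_small (u j) q Hq ltac:(lra)). pose proof (pw_nonneg (u j) q).
    rewrite Rabs_right by lra. lra.
  - assert (Hc : continuity_pt (fun x => Rpower x q) a).
    { apply derivable_continuous_pt. exists (q * Rpower a (q - 1)).
      apply derivable_pt_lim_power; lra. }
    intros eps Heps. destruct (Hc eps Heps) as [d [Hd Hd']].
    destruct (Hcv (Rmin d (a/2))) as [J HJ].
    { apply Rmin_pos; lra. }
    exists J; intros j Hj. specialize (HJ j Hj). unfold R_dist in *.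
    pose proof (Rmin_l d (a/2)); pose proof (Rmin_r d (a/2)).
    assert (0 < u j) by (apply Rabs_def2 in HJ; lra).
    rewrite !pw_pos by lra.
    destruct (Req_dec (u j) a) as [->|Hne].
    + unfold Rminus; rewrite Rplus_opp_r, Rabs_R0; lra.
    + apply (Hd' (u j)). split.
      * split; [exact I| auto].
      * simpl. unfold R_dist. lra.
Qed.


Lemma sum_mono_bound h b1 b2 : (forall i, 0 <= h i) -> (b1 <= b2)%nat ->
  sum_f_R0 h b1 <= sum_f_R0 h b2.
Proof.
  intros Hh Hb. induction Hb; [lra|]. simpl. pose proof (Hh (S m)); lra.
Qed.

Lemma sum_single h c b : (forall i, 0 <= h i) -> (c <= b)%nat -> h c <= sum_f_R0 h b.
Proof.
  intros Hh Hb. apply Rle_trans with (sum_f_R0 h c).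
  - destruct c; simpl; [lra|]. pose proof (cond_pos_sum h c Hh); lra.
  - apply sum_mono_bound; auto.
Qed.

Lemma sum_shift h c a : (forall i, 0 <= h i) ->
  sum_f_R0 (fun i => h (i + c)%nat) a <= sum_f_R0 h (c + a).
Proof.
  intros Hh. induction a.
  - simpl. rewrite Nat.add_0_r. apply sum_single; auto.
  - simpl. replace (c + S a)%nat with (S (c + a)) by lia. simpl.
    replace (S (a + c)) with (S (c + a)) by lia. lra.
Qed.

Lemma p_cases p : Rbar_le (Finite 1) p -> (exists q, p = Finite q /\ 1 <= q) \/ p = p_infty.
Proof.
  destruct p as [q| |]; simpl; intros H; [left; exists q; auto | right; auto | contradiction].
Qed.

Lemma psum_nonneg q x N : 0 <= psum q x N.
Proof. unfold psum. apply cond_pos_sum. intros; apply pw_nonneg. Qed.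

Lemma lp_mono p f g c M : Rbar_le (Finite 1) p -> 0 <= c -> 0 <= M ->
  (forall n, Cmod (f n) <= c * Cmod (g n)) -> lp_le p g M -> lp_le p f (c * M).
Proof.
  intros hp Hc HM Hfg Hg. destruct (p_cases p hp) as [[q [-> Hq]] | ->]; simpl in *.
  - intros N. specialize (Hg N). unfold psum in *.
    apply Rle_trans with (sum_f_R0 (fun k => pw c q * pw (Cmod (g (Z.of_nat k - Z.of_nat N)%Z)) q) (2*N)).
    + apply sum_Rle. intros i _. rewrite <- pw_mult by (auto; apply Cmod_ge_0).
      apply pw_le; [lra|]. split; [apply Cmod_ge_0| apply Hfg].
    + rewrite pw_mult by auto.
      rewrite <- (sum_eq (fun k => pw (Cmod (g (Z.of_nat k - Z.of_nat N)%Z)) q * pw c q)).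
      2:{ intros; ring. }
      rewrite <- scal_sum. apply Rmult_le_compat_l; auto. apply pw_nonneg.
  - intros n. eapply Rle_trans; [apply Hfg|]. apply Rmult_le_compat_l; auto.
Qed.

Lemma lp_add p f a b c M1 M2 : Rbar_le (Finite 1) p -> 0 <= c -> 0 <= M1 -> 0 <= M2 ->
  (forall n, Cmod (f n) <= c * (Cmod (a n) + Cmod (b n))) ->
  lp_le p a M1 -> lp_le p b M2 -> lp_le p f (c * (4 * (M1 + M2))).
Proof.
  intros hp Hc H1 H2 Hf Ha Hb. destruct (p_cases p hp) as [[q [-> Hq]] | ->]; simpl in *.
  - intros N. specialize (Ha N); specialize (Hb N). unfold psum in *.
    set (A := fun k => pw (Cmod (a (Z.of_nat k - Z.of_nat N)%Z)) q) in *.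
    set (B := fun k => pw (Cmod (b (Z.of_nat k - Z.of_nat N)%Z)) q) in *.
    apply Rle_trans with (sum_f_R0 (fun k => (A k + B k) * pw (2*c) q) (2*N)).
    + apply sum_Rle. intros i _. unfold A, B.
      set (u := Cmod (a _)). set (w := Cmod (b _)).
      assert (0 <= u) by apply Cmod_ge_0. assert (0 <= w) by apply Cmod_ge_0.
      apply Rle_trans with (pw ((2*c) * Rmax u w) q).
      * apply pw_le; [lra|]. split; [apply Cmod_ge_0|].
        eapply Rle_trans; [apply Hf|].
        pose proof (Rmax_l u w); pose proof (Rmax_r u w).
        replace (2*c*Rmax u w) with (c * (2 * Rmax u w)) by ring.
        apply Rmult_le_compat_l; [lra|]. unfold u, w in *; lra.
      * rewrite pw_mult by (try lra; apply Rmax_case; lra).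
        rewrite Rmult_comm. apply Rmult_le_compat_r; [apply pw_nonneg| apply pw_max].
    + rewrite <- scal_sum, plus_sum.
      assert (pw M1 q <= pw (M1+M2) q) by (apply pw_le; lra).
      assert (pw M2 q <= pw (M1+M2) q) by (apply pw_le; lra).
      pose proof (pw_2 q Hq).
      assert (E : pw (c * (4 * (M1 + M2))) q = pw (2*c) q * (pw 2 q * pw (M1+M2) q)).
      { rewrite <- (pw_mult 2 (M1+M2)) by lra. rewrite <- pw_mult by lra. f_equal; ring. }
      rewrite E. apply Rmult_le_compat_l; [apply pw_nonneg|].
      pose proof (pw_nonneg (M1+M2) q). nra.
  - intros n. eapply Rle_trans; [apply Hf|]. apply Rmult_le_compat_l; auto.
    specialize (Ha n); specialize (Hb n); lra.
Qed.

Lemma lp_shift p x M k : Rbar_le (Finite 1) p -> lp_le p x M ->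
  lp_le p (fun n => x (n + k)%Z) M.
Proof.
  intros hp Hx. destruct (p_cases p hp) as [[q [-> Hq]] | ->]; simpl in *.
  - intros N. specialize (Hx (N + Z.abs_nat k)%nat). eapply Rle_trans; [|exact Hx].
    unfold psum.
    set (h := fun k0 => pw (Cmod (x (Z.of_nat k0 - Z.of_nat (N + Z.abs_nat k))%Z)) q).
    set (c := Z.to_nat (Z.abs k + k)).
    apply Rle_trans with (sum_f_R0 (fun i => h (i + c)%nat) (2*N)).
    + right. apply sum_eq. intros i _. unfold h. do 3 f_equal. unfold c. lia.
    + eapply Rle_trans; [apply sum_shift; intros; apply pw_nonneg|].
      apply sum_mono_bound; [intros; apply pw_nonneg| unfold c; lia].
  - intros n; apply Hx.
Qed.

Lemma lp_point p x M n : Rbar_le (Finite 1) p -> 0 <= M -> lp_le p x M -> Cmod (x n) <= M.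
Proof.
  intros hp HM Hx. destruct (p_cases p hp) as [[q [-> Hq]] | ->]; simpl in *.
  - specialize (Hx (Z.abs_nat n)). unfold psum in Hx.
    apply (pw_le_inv _ _ q); try lra; try apply Cmod_ge_0.
    eapply Rle_trans; [|exact Hx].
    set (h := fun k => pw (Cmod (x (Z.of_nat k - Z.of_nat (Z.abs_nat n))%Z)) q).
    replace (pw (Cmod (x n)) q) with (h (Z.to_nat (n + Z.abs n))).
    + apply sum_single; [intros; apply pw_nonneg| lia].
    + unfold h. do 3 f_equal. lia.
  - apply Hx.
Qed.

Lemma sum_cv (F : nat -> nat -> R) (G : nat -> R) m :
  (forall i, Un_cv (fun j => F j i) (G i)) ->
  Un_cv (fun j => sum_f_R0 (F j) m) (sum_f_R0 G m).
Proof.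
  intros H. induction m; simpl; auto. apply CV_plus; auto.
Qed.

Lemma Un_cv_le u l c : Un_cv u l -> (forall j, u j <= c) -> l <= c.
Proof.
  intros Hu Hc. apply (@Rle_cv_lim u (fun _ => c) l c); auto.
  intros e He; exists 0%nat; intros; unfold R_dist; rewrite Rminus_eq_0, Rabs_R0; lra.
Qed.

Lemma Cmod_cv (xs : nat -> C) (x : C) :
  (forall eps, 0 < eps -> exists J, forall j, (j >= J)%nat -> Cmod (Cminus (xs j) x) < eps) ->
  Un_cv (fun j => Cmod (xs j)) (Cmod x).
Proof.
  intros H eps Heps. destruct (H eps Heps) as [J HJ]. exists J; intros j Hj.
  specialize (HJ j Hj). unfold R_dist.
  assert (E1 : Cmod (xs j) <= Cmod (Cminus (xs j) x) + Cmod x).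
  { replace (xs j) with (Cplus (Cminus (xs j) x) x) at 1 by (unfold Cminus; ring).
    apply Cmod_triangle. }
  assert (E2 : Cmod x <= Cmod (Cminus (xs j) x) + Cmod (xs j)).
  { replace x with (Cplus (Copp (Cminus (xs j) x)) (xs j)) at 1 by (unfold Cminus; ring).
    eapply Rle_trans; [apply Cmod_triangle|]. rewrite Cmod_opp; lra. }
  apply Rabs_def1; lra.
Qed.

Lemma lp_limit p (xs : nat -> seqZ) x M : Rbar_le (Finite 1) p -> 0 <= M ->
  (forall n eps, 0 < eps -> exists J, forall j, (j >= J)%nat -> Cmod (Cminus (xs j n) (x n)) < eps) ->
  (forall j, lp_le p (xs j) M) -> lp_le p x M.
Proof.
  intros hp HM Hcv Hxs. destruct (p_cases p hp) as [[q [-> Hq]] | ->]; simpl in *.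
  - intros N. apply (Un_cv_le (fun j => psum q (xs j) N)); [|intros; apply Hxs].
    unfold psum. apply (sum_cv (fun j k => pw (Cmod (xs j (Z.of_nat k - Z.of_nat N)%Z)) q)).
    intros i. apply pw_cont; auto; try (intros; apply Cmod_ge_0); try apply Cmod_ge_0.
    apply Cmod_cv. apply Hcv.
  - intros n. apply (Un_cv_le (fun j => Cmod (xs j n))); [|intros; apply Hxs].
    apply Cmod_cv, Hcv.
Qed.


Definition Tz (lam : R) (z : C) (V : Z -> R) (x : seqZ) : seqZ :=
  fun n => Cminus (schr lam V x n) (Cmult z (x n)).

Lemma Tz_lin lam z V a b c n :
  Tz lam z V (fun n => Cplus (a n) (Cmult c (b n))) n = Cplus (Tz lam z V a n) (Cmult c (Tz lam z V b n)).
Proof. unfold Tz, schr, Cminus. ring. Qed.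

Lemma Tz_sub lam z V a b n :
  Tz lam z V (fun n => Cminus (a n) (b n)) n = Cminus (Tz lam z V a n) (Tz lam z V b n).
Proof. unfold Tz, schr, Cminus. ring. Qed.

Lemma Cmod_sub_le a b : Cmod (Cminus a b) <= Cmod a + Cmod b.
Proof. unfold Cminus. eapply Rle_trans; [apply Cmod_triangle|]. rewrite Cmod_opp; lra. Qed.

Lemma lp_ext p f g M : (forall n, f n = g n) -> lp_le p g M -> lp_le p f M.
Proof. intros H. replace f with g; auto. apply functional_extensionality; intros; auto. Qed.

Lemma Tz_bound p lam z V c : Rbar_le (Finite 1) p -> 0 <= c -> (forall n, Rabs (lam * V n) <= c) ->
  exists C, 0 <= C /\ forall x M, 0 <= M -> lp_le p x M -> lp_le p (Tz lam z V x) (C * M).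
Proof.
  intros hp Hc HV. exists (4 * (8 + (c + Cmod z))). split.
  { pose proof (Cmod_ge_0 z); lra. }
  intros x M HM Hx.
  assert (Hs : lp_le p (fun n => Cplus (x (n+1)%Z) (x (n-1)%Z)) (1 * (4 * (M + M)))).
  { apply (lp_add p _ (fun n => x (n+1)%Z) (fun n => x (n + -1)%Z)); auto; try lra.
    - intros n. rewrite Rmult_1_l. replace (n - 1)%Z with (n + -1)%Z by lia. apply Cmod_triangle.
    - apply lp_shift; auto.
    - apply lp_shift; auto. }
  assert (Ht : lp_le p (fun n => Cmult (Cminus (RtoC (lam * V n)) z) (x n)) ((c + Cmod z) * M)).
  { apply (lp_mono p _ x); auto. { pose proof (Cmod_ge_0 z); lra. }
    intros n. rewrite Cmod_mult. apply Rmult_le_compat_r; [apply Cmod_ge_0|].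
    eapply Rle_trans; [apply Cmod_sub_le|]. rewrite Cmod_R. specialize (HV n); lra. }
  replace (4 * (8 + (c + Cmod z)) * M) with (1 * (4 * (1 * (4 * (M + M)) + (c + Cmod z) * M))) by ring.
  pose proof (Cmod_ge_0 z).
  apply (lp_add p _ (fun n => Cplus (x (n+1)%Z) (x (n-1)%Z)) (fun n => Cmult (Cminus (RtoC (lam * V n)) z) (x n))); auto; try lra; try nra.
  intros n. rewrite Rmult_1_l.
  replace (Tz lam z V x n) with (Cplus (Cplus (x (n+1)%Z) (x (n-1)%Z)) (Cmult (Cminus (RtoC (lam * V n)) z) (x n))).
  - apply Cmod_triangle.
  - unfold Tz, schr, Cminus. ring.
Qed.

Definition Good p lam z (W : Z -> R) K := 0 <= K /\
  (forall y M, 0 <= M -> lp_le p y M -> exists x, lp_le p x (K * M) /\ Tz lam z W x = y) /\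
  (forall w M, 0 <= M -> in_lp p w -> lp_le p (Tz lam z W w) M -> lp_le p w (K * M)).

Lemma Good_of_notspec p lam z W : ~ spectrum p (schr lam W) z -> exists K, Good p lam z W K.
Proof.
  intros Hns. unfold spectrum in Hns. apply Classical_Prop.NNPP in Hns.
  destruct Hns as [G [[HG1 [HG2 [K [HK HGK]]]] [Hinv1 Hinv2]]].
  exists K. split; [auto|split].
  - intros y M HM Hy. exists (G y). split.
    + apply HGK; auto.
    + assert (Hy' : in_lp p y) by (exists M; auto).
      exact (Hinv2 y Hy').
  - intros w M HM Hw HT. rewrite <- (Hinv1 w Hw). apply HGK; auto.
Qed.

Lemma Tz_shift lam z W k x n :
  Tz lam z (fun m => W (m + k)%Z) (fun m => x (m + k)%Z) n = Tz lam z W x (n + k)%Z.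
Proof.
  unfold Tz, schr.
  replace (n + 1 + k)%Z with (n + k + 1)%Z by lia.
  replace (n - 1 + k)%Z with (n + k - 1)%Z by lia. reflexivity.
Qed.

Lemma Good_shift p lam z W K k : Rbar_le (Finite 1) p -> Good p lam z W K ->
  Good p lam z (fun m => W (m + k)%Z) K.
Proof.
  intros hp [HK [Hex Hlb]]. split; [auto|split].
  - intros y M HM Hy.
    destruct (Hex (fun n => y (n + - k)%Z) M HM (lp_shift p y M (- k) hp Hy)) as [x' [Hx' Hx'T]].
    exists (fun n => x' (n + k)%Z). split.
    + apply lp_shift; auto.
    + apply functional_extensionality; intros n. rewrite Tz_shift, Hx'T.
      f_equal; lia.
  - intros w M HM [Mw [HMw Hw]] HT.
    set (w' := fun n => w (n + - k)%Z).
    assert (Hw' : lp_le p w (K * M) <-> lp_le p (fun n => w' (n + k)%Z) (K * M)).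
    { replace (fun n => w' (n + k)%Z) with w; [tauto|].
      apply functional_extensionality; intros n; unfold w'; f_equal; lia. }
    apply Hw'. apply lp_shift; auto. apply Hlb; auto.
    + exists Mw; split; auto. apply lp_shift; auto.
    + apply (lp_ext p _ (fun n => Tz lam z (fun m => W (m + k)%Z) w (n + - k)%Z)).
      * intros n. replace w with (fun m => w' (m + k)%Z) at 1.
        -- rewrite Tz_shift. f_equal. lia.
        -- apply functional_extensionality; intros m; unfold w'; f_equal; lia.
      * apply lp_shift; auto.
Qed.


Definition phi (r : nat) (n : Z) : R := Rmax 0 (1 - IZR (Z.abs n) / INR r).

Lemma phi_nonneg r n : 0 <= phi r n.
Proof. apply Rmax_l. Qed.

Lemma phi_zero r n : (0 < r)%nat -> (Z.of_nat r <= Z.abs n)%Z -> phi r n = 0.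
Proof.
  intros HR Hn. unfold phi. apply Rmax_left.
  assert (0 < INR r) by (apply lt_0_INR; auto).
  assert (INR r <= IZR (Z.abs n)) by (rewrite INR_IZR_INZ; apply IZR_le; auto).
  assert (1 <= IZR (Z.abs n) / INR r).
  { apply (Rmult_le_reg_r (INR r)); auto. unfold Rdiv. rewrite Rmult_assoc, Rinv_l by lra. lra. }
  lra.
Qed.

Lemma phi_half r n : (0 < r)%nat -> (2 * Z.abs n <= Z.of_nat r)%Z -> / 2 <= phi r n.
Proof.
  intros HR Hn. unfold phi. eapply Rle_trans; [|apply Rmax_r].
  assert (0 < INR r) by (apply lt_0_INR; auto).
  assert (2 * IZR (Z.abs n) <= INR r) by (rewrite INR_IZR_INZ; rewrite <- mult_IZR; apply IZR_le; auto).
  assert (IZR (Z.abs n) / INR r <= /2).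
  { apply (Rmult_le_reg_r (INR r)); auto. unfold Rdiv. rewrite Rmult_assoc, Rinv_l by lra. lra. }
  lra.
Qed.

Lemma Rmax0_lip a b : Rabs (Rmax 0 a - Rmax 0 b) <= Rabs (a - b).
Proof.
  unfold Rmax; destruct (Rle_dec 0 a); destruct (Rle_dec 0 b);
    apply Rabs_le; pose proof (Rabs_pos (a-b));
    destruct (Rabs_def2 (a - b) (Rabs (a-b) + 1)); try lra;
    unfold Rabs; destruct Rcase_abs; lra.
Qed.

Lemma phi_lip r n d : (0 < r)%nat -> (d = 1 \/ d = -1)%Z ->
  Rabs (phi r (n + d) - phi r n) <= / INR r.
Proof.
  intros HR Hd. unfold phi. eapply Rle_trans; [apply Rmax0_lip|].
  assert (0 < INR r) by (apply lt_0_INR; auto).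
  replace (1 - IZR (Z.abs (n + d)) / INR r - (1 - IZR (Z.abs n) / INR r))
    with (IZR (Z.abs n - Z.abs (n+d)) * / INR r) by (rewrite minus_IZR; field; lra).
  rewrite Rabs_mult, (Rabs_right (/ INR r)) by (left; apply Rinv_0_lt_compat; auto).
  rewrite <- (Rmult_1_l (/ INR r)) at 2. apply Rmult_le_compat_r.
  { left; apply Rinv_0_lt_compat; auto. }
  rewrite <- abs_IZR. replace 1 with (IZR 1) by reflexivity. apply IZR_le. lia.
Qed.

Lemma Tz_site lam z W V (f : seqZ) n : W n = V n -> Tz lam z W f n = Tz lam z V f n.
Proof. intros H. unfold Tz, schr. rewrite H. reflexivity. Qed.

Lemma Tz_agree lam z W V (f : seqZ) (r : nat) :
  (forall n, (Z.abs n <= Z.of_nat r)%Z -> W n = V n) ->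
  (forall n, (Z.of_nat r < Z.abs n)%Z -> f n = 0%C) ->
  forall n, Tz lam z W f n = Tz lam z V f n.
Proof.
  intros HWV Hf n. destruct (Z_le_gt_dec (Z.abs n) (Z.of_nat r)) as [h|h].
  - apply Tz_site; auto.
  - unfold Tz, schr. rewrite (Hf n) by lia. unfold Cminus. ring.
Qed.

Lemma Tz_phi lam z V w r n :
  Tz lam z V (fun m => Cmult (RtoC (phi r m)) (w m)) n =
  Cplus (Cplus (Cmult (RtoC (phi r n)) (Tz lam z V w n))
     (Cmult (Cminus (RtoC (phi r (n + 1)%Z)) (RtoC (phi r n))) (w (n+1)%Z)))
     (Cmult (Cminus (RtoC (phi r (n + -1)%Z)) (RtoC (phi r n))) (w (n + -1)%Z)).
Proof.
  unfold Tz, schr. replace (n - 1)%Z with (n + -1)%Z by lia. unfold Cminus. ring.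
Qed.

Lemma Cmod_RtoC_sub a b : Cmod (Cminus (RtoC a) (RtoC b)) = Rabs (a - b).
Proof.
  rewrite <- Cmod_R. f_equal. unfold Cminus, Cplus, Copp, RtoC. simpl. f_equal; ring.
Qed.

Lemma comm_est p lam z V w M (r : nat) : Rbar_le (Finite 1) p -> (0 < r)%nat -> 0 <= M ->
  lp_le p w M -> (forall n, (Z.abs n <= Z.of_nat r)%Z -> Tz lam z V w n = 0%C) ->
  lp_le p (Tz lam z V (fun m => Cmult (RtoC (phi r m)) (w m))) (/ INR r * (4 * (M + M))).
Proof.
  intros hp HR HM Hw HT.
  assert (0 < INR r) by (apply lt_0_INR; auto).
  assert (0 < / INR r) by (apply Rinv_0_lt_compat; auto).
  apply (lp_add p _ (fun n => w (n+1)%Z) (fun n => w (n + -1)%Z)); auto; try lra.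
  - intros n. rewrite Tz_phi.
    assert (E : Cmult (RtoC (phi r n)) (Tz lam z V w n) = 0%C).
    { destruct (Z_le_gt_dec (Z.abs n) (Z.of_nat r)) as [h|h].
      - rewrite HT by auto. ring.
      - rewrite phi_zero by (auto; lia). ring. }
    rewrite E, Cplus_0_l. eapply Rle_trans; [apply Cmod_triangle|].
    rewrite !Cmod_mult, !Cmod_RtoC_sub.
    pose proof (phi_lip r n 1 HR ltac:(lia)). pose proof (phi_lip r n (-1) HR ltac:(lia)).
    pose proof (Cmod_ge_0 (w (n+1)%Z)). pose proof (Cmod_ge_0 (w (n + -1)%Z)).
    rewrite Rmult_plus_distr_l.
    apply Rplus_le_compat; apply Rmult_le_compat_r; auto.
  - apply lp_shift; auto.
  - apply lp_shift; auto.
Qed.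


Lemma phi_le1 r n : phi r n <= 1.
Proof.
  unfold phi. apply Rmax_lub; [lra|].
  destruct r. { simpl. unfold Rdiv. rewrite Rinv_0. lra. }
  assert (0 < INR (S r)) by (apply lt_0_INR; lia).
  assert (0 <= IZR (Z.abs n)) by (apply IZR_le; lia).
  assert (0 <= IZR (Z.abs n) / INR (S r)) by (apply Rdiv_le_0_compat; lra). lra.
Qed.

Definition Happ (W V : Z -> R) := forall r : nat, exists k, forall n,
  (Z.abs n <= Z.of_nat r)%Z -> W (n + k)%Z = V n.

Lemma est_E p lam z W V K w M r : Rbar_le (Finite 1) p -> Good p lam z W K -> Happ W V ->
  (0 < r)%nat -> 0 <= M -> lp_le p w M ->
  (forall n, (Z.abs n <= Z.of_nat r)%Z -> Tz lam z V w n = 0%C) ->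
  forall n, Cmod (Cmult (RtoC (phi r n)) (w n)) <= K * (/ INR r * (4 * (M + M))).
Proof.
  intros hp HG HA Hr HM Hw HT n.
  set (f := fun m => Cmult (RtoC (phi r m)) (w m)).
  destruct (HA r) as [k Hk].
  destruct (Good_shift p lam z W K k hp HG) as [HK [_ Hlb]].
  assert (0 < INR r) by (apply lt_0_INR; auto).
  assert (0 < / INR r) by (apply Rinv_0_lt_compat; auto).
  assert (Hb : 0 <= / INR r * (4 * (M + M))) by nra.
  apply (lp_point p f); [auto| nra |].
  apply Hlb; auto.
  - exists M; split; auto. rewrite <- (Rmult_1_l M). apply (lp_mono p f w); auto; try lra.
    intros m. unfold f. rewrite Cmod_mult, Cmod_R.
    apply Rmult_le_compat_r; [apply Cmod_ge_0|].
    rewrite Rabs_right by (apply Rle_ge, phi_nonneg). apply phi_le1.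
  - apply (lp_ext p _ (Tz lam z V f)).
    + apply (Tz_agree lam z _ V f r); auto.
      intros m Hm. unfold f. rewrite phi_zero by (auto; lia). ring.
    + apply comm_est; auto.
Qed.

Lemma small_nat_bound (C : R) (n : Z) : exists r : nat, (0 < r)%nat /\
  (2 * Z.abs n <= Z.of_nat r)%Z /\ C < INR r.
Proof.
  destruct (INR_unbounded C) as [N HN].
  exists (N + Z.to_nat (2 * Z.abs n) + 1)%nat. split; [lia|split; [lia|]].
  rewrite !plus_INR. pose proof (pos_INR (Z.to_nat (2 * Z.abs n))). change (INR 1) with 1. lra.
Qed.

Lemma uniq0 p lam z W V K w : Rbar_le (Finite 1) p -> Good p lam z W K -> Happ W V ->
  in_lp p w -> (forall n, Tz lam z V w n = 0%C) -> forall n, w n = 0%C.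
Proof.
  intros hp HG HA [M [HM Hw]] HT n.
  destruct HG as [HK HG'].
  apply Cmod_eq_0. apply Rle_antisym; [|apply Cmod_ge_0].
  apply Rnot_lt_le. intros Hpos.
  destruct (small_nat_bound (16 * K * M / Cmod (w n)) n) as [r [Hr [Hrn HrC]]].
  pose proof (est_E p lam z W V K w M r hp (conj HK HG') HA Hr HM Hw (fun m _ => HT m) n) as E.
  rewrite Cmod_mult, Cmod_R, Rabs_right in E by (apply Rle_ge, phi_nonneg).
  pose proof (phi_half r n Hr Hrn).
  assert (0 < INR r) by (apply lt_0_INR; auto).
  assert (E2 : / 2 * Cmod (w n) <= K * (/ INR r * (4 * (M + M)))).
  { eapply Rle_trans; [|exact E]. apply Rmult_le_compat_r; [apply Cmod_ge_0| auto]. }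
  assert (E3 : Cmod (w n) * INR r <= 16 * K * M).
  { apply (Rmult_le_compat_r (2 * INR r)) in E2; [|lra].
    replace (K * (/ INR r * (4 * (M + M))) * (2 * INR r)) with (16 * K * M) in E2 by (field; lra).
    lra. }
  apply (Rmult_lt_compat_l (Cmod (w n))) in HrC; auto.
  replace (Cmod (w n) * (16 * K * M / Cmod (w n))) with (16 * K * M) in HrC by (field; lra).
  lra.
Qed.

Lemma choice_fun {A B : Type} (P : A -> B -> Prop) : (forall a, exists b, P a b) -> exists f, forall a, P a (f a).
Proof.
  intros H. exists (fun a => proj1_sig (constructive_indefinite_description _ (H a))).
  intros a. apply (proj2_sig (constructive_indefinite_description _ (H a))).
Qed.

Lemma Cmod_le_sum (u : C) : Cmod u <= Rabs (fst u) + Rabs (snd u).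
Proof.
  unfold Cmod. rewrite <- (sqrt_Rsqr (Rabs (fst u) + Rabs (snd u))) by (pose proof (Rabs_pos (fst u)); pose proof (Rabs_pos (snd u)); lra).
  apply sqrt_le_1_alt. unfold Rsqr. simpl.
  pose proof (Rabs_pos (fst u)); pose proof (Rabs_pos (snd u)).
  pose proof (Rsqr_abs (fst u)); pose proof (Rsqr_abs (snd u)). unfold Rsqr in *. nra.
Qed.

Lemma Rabs_fst_le (u : C) : Rabs (fst u) <= Cmod u.
Proof. eapply Rle_trans; [apply Rmax_l| apply Rmax_Cmod]. Qed.
Lemma Rabs_snd_le (u : C) : Rabs (snd u) <= Cmod u.
Proof. eapply Rle_trans; [apply Rmax_r| apply Rmax_Cmod]. Qed.

Lemma Cmod_sub_sym a b : Cmod (Cminus a b) = Cmod (Cminus b a).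
Proof. replace (Cminus a b) with (Copp (Cminus b a)) by (unfold Cminus; ring). apply Cmod_opp. Qed.

Lemma C_limit (u : nat -> C) :
  (forall eps, 0 < eps -> exists J, forall i j, (i >= J)%nat -> (j >= J)%nat -> Cmod (Cminus (u i) (u j)) < eps) ->
  exists l, forall eps, 0 < eps -> exists J, forall j, (j >= J)%nat -> Cmod (Cminus (u j) l) < eps.
Proof.
  intros H.
  assert (H1 : Cauchy_crit (fun j => fst (u j))).
  { intros e He. destruct (H e He) as [J HJ]. exists J. intros i j Hi Hj. unfold R_dist.
    eapply Rle_lt_trans; [|apply (HJ i j Hi Hj)].
    replace (fst (u i) - fst (u j)) with (fst (Cminus (u i) (u j))) by (simpl; ring).
    apply Rabs_fst_le. }
  assert (H2 : Cauchy_crit (fun j => snd (u j))).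
  { intros e He. destruct (H e He) as [J HJ]. exists J. intros i j Hi Hj. unfold R_dist.
    eapply Rle_lt_trans; [|apply (HJ i j Hi Hj)].
    replace (snd (u i) - snd (u j)) with (snd (Cminus (u i) (u j))) by (simpl; ring).
    apply Rabs_snd_le. }
  destruct (Rcomplete.R_complete _ H1) as [l1 Hl1].
  destruct (Rcomplete.R_complete _ H2) as [l2 Hl2].
  exists (l1, l2). intros eps Heps.
  destruct (Hl1 (eps/2)) as [J1 HJ1]; [lra|].
  destruct (Hl2 (eps/2)) as [J2 HJ2]; [lra|].
  exists (J1 + J2)%nat. intros j Hj.
  specialize (HJ1 j ltac:(lia)); specialize (HJ2 j ltac:(lia)). unfold R_dist in *.
  eapply Rle_lt_trans; [apply Cmod_le_sum|]. simpl.
  replace (fst (u j) + - l1) with (fst (u j) - l1) by ring.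
  replace (snd (u j) + - l2) with (snd (u j) - l2) by ring. lra.
Qed.

Lemma Tz_pt_bound lam z V (f : seqZ) c n : Rabs (lam * V n) <= c ->
  Cmod (Tz lam z V f n) <= Cmod (f (n+1)%Z) + Cmod (f (n-1)%Z) + (c + Cmod z) * Cmod (f n).
Proof.
  intros Hc.
  replace (Tz lam z V f n) with (Cplus (Cplus (f (n+1)%Z) (f (n-1)%Z)) (Cmult (Cminus (RtoC (lam * V n)) z) (f n)))
    by (unfold Tz, schr, Cminus; ring).
  eapply Rle_trans; [apply Cmod_triangle|]. apply Rplus_le_compat; [apply Cmod_triangle|].
  rewrite Cmod_mult. apply Rmult_le_compat_r; [apply Cmod_ge_0|].
  eapply Rle_trans; [apply Cmod_sub_le|]. rewrite Cmod_R. lra.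
Qed.

Lemma exist_sol p lam z W V K c y M : Rbar_le (Finite 1) p -> Good p lam z W K -> Happ W V ->
  0 <= c -> (forall n, Rabs (lam * V n) <= c) -> 0 <= M -> lp_le p y M ->
  exists x, lp_le p x (K * M) /\ forall n, Tz lam z V x n = y n.
Proof.
  intros hp HG HA Hc HV HM Hy.
  assert (HK : 0 <= K) by apply HG.
  assert (Hj : forall j : nat, exists x, lp_le p x (K * M) /\
     forall n, (Z.abs n <= Z.of_nat j)%Z -> Tz lam z V x n = y n).
  { intros j. destruct (HA j) as [k Hk].
    destruct (Good_shift p lam z W K k hp HG) as [_ [Hex _]].
    destruct (Hex y M HM Hy) as [x [Hx HxT]]. exists x. split; auto.
    intros n Hn. rewrite <- (Tz_site lam z (fun m => W (m + k)%Z) V x n (Hk n Hn)).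
    rewrite HxT. reflexivity. }
  destruct (choice_fun _ Hj) as [xs Hxs].
  set (Mw := 1 * (4 * (K * M + K * M))).
  assert (HMw : 0 <= Mw) by (unfold Mw; nra).
  assert (Hcauchy : forall n eps, 0 < eps -> exists J, forall i j, (i >= J)%nat -> (j >= J)%nat ->
     Cmod (Cminus (xs i n) (xs j n)) < eps).
  { intros n eps Heps.
    set (B := K * (4 * (Mw + Mw))).
    assert (HB : 0 <= B) by (unfold B; nra).
    destruct (small_nat_bound (2 * B / eps) n) as [r [Hr [Hrn HrC]]].
    exists r. intros i j Hi Hj0.
    set (w := fun m => Cminus (xs i m) (xs j m)).
    assert (Hw : lp_le p w Mw).
    { unfold Mw. apply (lp_add p w (xs i) (xs j) 1 (K*M) (K*M));
        [auto|lra|nra|nra| intros m; rewrite Rmult_1_l; apply Cmod_sub_le | apply Hxs | apply Hxs]. }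
    assert (HT : forall m, (Z.abs m <= Z.of_nat r)%Z -> Tz lam z V w m = 0%C).
    { intros m Hm. unfold w. rewrite Tz_sub.
      rewrite (proj2 (Hxs i)) by lia. rewrite (proj2 (Hxs j)) by lia. unfold Cminus; ring. }
    pose proof (est_E p lam z W V K w Mw r hp HG HA Hr HMw Hw HT n) as E.
    rewrite Cmod_mult, Cmod_R, Rabs_right in E by (apply Rle_ge, phi_nonneg).
    pose proof (phi_half r n Hr Hrn).
    assert (0 < INR r) by (apply lt_0_INR; auto).
    assert (E2 : / 2 * Cmod (w n) <= B / INR r).
    { eapply Rle_trans; [|replace (B / INR r) with (K * (/ INR r * (4 * (Mw + Mw)))) by (unfold B; field; lra); exact E].
      apply Rmult_le_compat_r; [apply Cmod_ge_0| auto]. }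
    assert (E3 : Cmod (w n) * INR r <= 2 * B).
    { apply (Rmult_le_compat_r (2 * INR r)) in E2; [|lra].
      replace (B / INR r * (2 * INR r)) with (2 * B) in E2 by (field; lra). lra. }
    apply (Rmult_lt_compat_l eps) in HrC; auto.
    replace (eps * (2 * B / eps)) with (2 * B) in HrC by (field; lra).
    fold (w n). destruct (Rle_or_lt eps (Cmod (w n))) as [h|h]; auto.
    assert (eps * INR r <= Cmod (w n) * INR r) by (apply Rmult_le_compat_r; lra). lra. }
  assert (Hlim : forall n, exists l, forall eps, 0 < eps -> exists J, forall j, (j >= J)%nat ->
     Cmod (Cminus (xs j n) l) < eps).
  { intros n. apply C_limit. intros; apply Hcauchy; auto. }
  destruct (choice_fun _ Hlim) as [x Hx].
  exists x. split.
  - apply (lp_limit p xs x (K * M)); auto; [nra|]. intros j; apply Hxs.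
  - intros n.
    enough (E : Cminus (Tz lam z V x n) (y n) = 0%C).
    { replace (Tz lam z V x n) with (Cplus (Cminus (Tz lam z V x n) (y n)) (y n)) by (unfold Cminus; ring).
      rewrite E; ring. }
    apply Cmod_eq_0.
    set (D := Cmod (Cminus (Tz lam z V x n) (y n))).
    assert (HD : forall eps, 0 < eps -> D <= (2 + c + Cmod z) * eps).
    { intros eps Heps.
      destruct (Hx (n+1)%Z eps Heps) as [J1 HJ1].
      destruct (Hx (n-1)%Z eps Heps) as [J2 HJ2].
      destruct (Hx n eps Heps) as [J3 HJ3].
      set (j := (J1 + J2 + J3 + Z.to_nat (Z.abs n))%nat).
      specialize (HJ1 j ltac:(unfold j; lia)). specialize (HJ2 j ltac:(unfold j; lia)).
      specialize (HJ3 j ltac:(unfold j; lia)).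
      unfold D. rewrite <- (proj2 (Hxs j) n) by (unfold j; lia).
      rewrite <- Tz_sub. eapply Rle_trans; [apply Tz_pt_bound; apply HV|].
      rewrite Cmod_sub_sym in HJ1, HJ2, HJ3.
      pose proof (Cmod_ge_0 z).
      assert ((c + Cmod z) * Cmod (Cminus (x n) (xs j n)) <= (c + Cmod z) * eps)
        by (apply Rmult_le_compat_l; lra).
      lra. }
    pose proof (Cmod_ge_0 z).
    apply Rle_antisym; [|apply Cmod_ge_0]. apply Rnot_lt_le; intros HDp.
    specialize (HD (D / (2 * (2 + c + Cmod z)))).
    assert (Hpos : 0 < D / (2 * (2 + c + Cmod z))) by (apply Rdiv_lt_0_compat; lra).
    specialize (HD Hpos).
    replace ((2 + c + Cmod z) * (D / (2 * (2 + c + Cmod z)))) with (D / 2) in HD by (field; lra).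
    fold D in HDp. lra.
Qed.


Lemma in_lp_lin p a b c : Rbar_le (Finite 1) p -> in_lp p a -> in_lp p b ->
  in_lp p (fun n => Cplus (a n) (Cmult c (b n))).
Proof.
  intros hp [Ma [HMa Ha]] [Mb [HMb Hb]].
  pose proof (Cmod_ge_0 c).
  assert (Hcb : lp_le p (fun n => Cmult c (b n)) (Cmod c * Mb)).
  { apply (lp_mono p _ b); auto. intros n. rewrite Cmod_mult. lra. }
  exists (1 * (4 * (Ma + Cmod c * Mb))). split; [nra|].
  apply (lp_add p _ a (fun n => Cmult c (b n))); auto; try lra; try nra.
  intros n. rewrite Rmult_1_l. apply Cmod_triangle.
Qed.

Lemma main_lemma p lam z W V c : Rbar_le (Finite 1) p -> 0 <= c ->
  (forall n, Rabs (lam * V n) <= c) -> Happ W V ->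
  ~ spectrum p (schr lam W) z -> ~ spectrum p (schr lam V) z.
Proof.
  intros hp Hc HV HA Hns.
  destruct (Good_of_notspec p lam z W Hns) as [K HG].
  assert (HK : 0 <= K) by apply HG.
  destruct (Tz_bound p lam z V c hp Hc HV) as [C [HC HTb]].
  assert (Huniq : forall a b, in_lp p a -> in_lp p b -> (forall n, Tz lam z V a n = Tz lam z V b n) -> a = b).
  { intros a b Ha Hb Hab.
    assert (Hw : in_lp p (fun n => Cplus (a n) (Cmult (RtoC (-1)) (b n)))) by (apply in_lp_lin; auto).
    pose proof (uniq0 p lam z W V K _ hp HG HA Hw) as U.
    apply functional_extensionality; intros n.
    assert (E : Cplus (a n) (Cmult (RtoC (-1)) (b n)) = 0%C).
    { apply U. intros m. rewrite Tz_lin, Hab. unfold RtoC; apply injective_projections; simpl; ring. }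
    replace (a n) with (Cplus (Cplus (a n) (Cmult (RtoC (-1)) (b n))) (b n)).
    - rewrite E. ring.
    - apply injective_projections; simpl; ring. }
  assert (HP : forall y, exists x, in_lp p y -> (in_lp p x /\ (forall n, Tz lam z V x n = y n) /\
      forall M, 0 <= M -> lp_le p y M -> lp_le p x (K * M))).
  { intros y. destruct (Classical_Prop.classic (in_lp p y)) as [Hy|Hy].
    - destruct Hy as [M0 [HM0 Hy0]].
      destruct (exist_sol p lam z W V K c y M0 hp HG HA Hc HV HM0 Hy0) as [x0 [Hx0 HTx0]].
      exists x0. intros _. split; [exists (K * M0); split; [nra|auto]|split; auto].
      intros M HM Hy.
      destruct (exist_sol p lam z W V K c y M hp HG HA Hc HV HM Hy) as [x1 [Hx1 HTx1]].
      replace x0 with x1; auto. apply Huniq.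
      + exists (K * M); split; [nra|auto].
      + exists (K * M0); split; [nra|auto].
      + intros n; rewrite HTx1, HTx0; auto.
    - exists (fun _ => 0%C). intros H; contradiction. }
  destruct (choice_fun _ HP) as [G HG'].
  intros Hs. apply Hs. exists G. split; [split; [|split]|split].
  - intros x Hx. apply HG'; auto.
  - intros x y c0 Hx Hy.
    assert (Hs1 : in_lp p (fun n => Cplus (x n) (Cmult c0 (y n)))) by (apply in_lp_lin; auto).
    destruct (HG' _ Hs1) as [HGs [HTs _]].
    destruct (HG' _ Hx) as [HGx [HTx _]].
    destruct (HG' _ Hy) as [HGy [HTy _]].
    apply Huniq; auto.
    + apply in_lp_lin; auto.
    + intros n. rewrite HTs, Tz_lin, HTx, HTy. reflexivity.
  - exists K. split; auto. intros x M HM Hx. apply HG'; auto. exists M; auto.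
  - intros x Hx. change (G (Tz lam z V x) = x).
    assert (HTx : in_lp p (Tz lam z V x)).
    { destruct Hx as [M [HM Hx]]. exists (C * M). split; [nra|]. apply HTb; auto. }
    destruct (HG' _ HTx) as [HGx [HTG _]].
    apply Huniq; auto.
  - intros x Hx. change (Tz lam z V (G x) = x).
    destruct (HG' _ Hx) as [_ [HT _]]. apply functional_extensionality; auto.
Qed.


Lemma frac1_range x : 0 <= frac1 x < 1.
Proof. unfold frac1. destruct (base_Int_part x). lra. Qed.

Lemma frac1_unique x m : 0 <= x - IZR m < 1 -> frac1 x = x - IZR m.
Proof.
  intros H. unfold frac1. f_equal. f_equal. unfold Int_part.
  rewrite <- (tech_up x (m + 1)); [lia| |]; rewrite plus_IZR; simpl; lra.
Qed.

Lemma frac1_int x y m : x = y + IZR m -> frac1 x = frac1 y.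
Proof.
  intros ->. pose proof (frac1_range y). unfold frac1 at 2.
  rewrite (frac1_unique _ (Int_part y + m)); rewrite plus_IZR; unfold frac1 in *; lra.
Qed.

Lemma frac1_decomp x : x = frac1 x + IZR (Int_part x).
Proof. unfold frac1; ring. Qed.

Lemma frac1_small x : 0 <= x < 1 -> frac1 x = x.
Proof. intros H. rewrite (frac1_unique x 0); simpl; lra. Qed.

Lemma frac_nonzero a k : irrational a -> k <> 0%Z -> frac1 (IZR k * a) <> 0.
Proof.
  intros Ha Hk E. apply Ha. exists (Int_part (IZR k * a)), k. split; auto.
  unfold frac1 in E. lra.
Qed.

Lemma pow2_gt n : INR n < 2 ^ n.
Proof.
  induction n; [simpl; lra|]. rewrite S_INR. change (2 ^ S n) with (2 * 2 ^ n).
  pose proof (pos_INR n). pose proof (pow_R1_Rle 2 n ltac:(lra)). lra.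
Qed.

Lemma small_frac a : irrational a -> forall r : nat, exists k, k <> 0%Z /\ 0 < frac1 (IZR k * a) <= / 2 ^ r.
Proof.
  intros Ha r. induction r.
  - exists 1%Z. split; [lia|]. simpl. pose proof (frac1_range (IZR 1 * a)).
    pose proof (frac_nonzero a 1 Ha ltac:(lia)). rewrite Rinv_1. lra.
  - destruct IHr as [k [Hk [Hb1 Hb2]]].
    set (b := frac1 (IZR k * a)) in *.
    pose proof (frac1_range (IZR k * a)) as Hbr. fold b in Hbr.
    set (i := Int_part (IZR k * a)).
    assert (Hki : IZR k * a = b + IZR i) by apply frac1_decomp.
    set (m := Int_part (/ b)).
    assert (Hm : IZR m <= / b < IZR m + 1).
    { pose proof (base_Int_part (/ b)). fold m in H. lra. }
    assert (Hinvb : 1 < / b).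
    { rewrite <- Rinv_1. apply Rinv_lt_contravar; lra. }
    assert (Hm1 : (1 <= m)%Z).
    { apply le_IZR. simpl. destruct (Rle_or_lt 1 (IZR m)); auto.
      assert (IZR m <= 0). { assert (m <= 0)%Z by (apply lt_IZR in H; simpl in H; lia). apply IZR_le in H0. auto. }
      lra. }
    assert (Hmb : IZR m * b <= 1).
    { assert (IZR m * b <= / b * b) by (apply Rmult_le_compat_r; lra).
      rewrite Rinv_l in H by lra. lra. }
    assert (Hmb2 : 1 < (IZR m + 1) * b).
    { assert (/ b * b < (IZR m + 1) * b) by (apply Rmult_lt_compat_r; lra).
      rewrite Rinv_l in H by lra. lra. }
    set (a' := (IZR m + 1) * b - 1).
    assert (Hk1 : frac1 (IZR ((m + 1) * k) * a) = a').
    { rewrite (frac1_int _ a' ((m + 1) * i + 1)).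
      - apply frac1_small. unfold a'. nra.
      - unfold a'. rewrite mult_IZR, plus_IZR, plus_IZR, mult_IZR, plus_IZR. simpl.
        replace ((IZR m + 1) * IZR k * a) with ((IZR m + 1) * (IZR k * a)) by ring.
        rewrite Hki. ring. }
    assert (Ha'b : a' < b).
    { destruct (Rle_or_lt b a') as [h|h]; auto. exfalso.
      assert (IZR m * b = 1) by (unfold a' in h; nra).
      apply (frac_nonzero a (m * k) Ha ltac:(nia)).
      rewrite (frac1_int _ 0 (m * i + 1)).
      - apply frac1_small; lra.
      - rewrite mult_IZR, plus_IZR, mult_IZR. simpl.
        replace (IZR m * IZR k * a) with (IZR m * (IZR k * a)) by ring. rewrite Hki. nra. }
    assert (Ha'0 : 0 < a') by (unfold a'; lra).
    assert (Hk2 : frac1 (IZR (- m * k) * a) = b - a').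
    { rewrite (frac1_int _ (b - a') (- m * i - 1)).
      - apply frac1_small. lra.
      - unfold a'. rewrite mult_IZR, minus_IZR, mult_IZR, opp_IZR. simpl.
        replace (- IZR m * IZR k * a) with (- IZR m * (IZR k * a)) by ring.
        rewrite Hki. ring. }
    assert (Hpow : / 2 ^ S r = / 2 * / 2 ^ r).
    { simpl. rewrite Rinv_mult. reflexivity. }
    destruct (Rle_or_lt a' (b / 2)) as [h|h].
    + exists ((m + 1) * k)%Z. split; [nia|]. rewrite Hk1, Hpow. lra.
    + exists (- m * k)%Z. split; [nia|]. rewrite Hk2, Hpow. lra.
Qed.

Lemma dens_right a : irrational a -> forall eps s, 0 < eps ->
  exists k, 0 < frac1 (s + IZR k * a) < eps.
Proof.
  intros Ha eps s Heps.
  destruct (INR_unbounded (/ eps)) as [r Hr].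
  destruct (small_frac a Ha r) as [k [Hk [Hb1 Hb2]]].
  pose proof (pow2_gt r).
  assert (Hpos : 0 < 2 ^ r) by (apply pow_lt; lra).
  assert (Hlt : / 2 ^ r < eps).
  { rewrite <- (Rinv_inv eps). apply Rinv_lt_contravar; [apply Rmult_lt_0_compat; auto; apply Rinv_0_lt_compat; auto| lra]. }
  set (b := frac1 (IZR k * a)) in *.
  pose proof (frac1_range (IZR k * a)) as Hbr. fold b in Hbr.
  assert (Hki : IZR k * a = b + IZR (Int_part (IZR k * a))) by apply frac1_decomp.
  set (s' := frac1 s). pose proof (frac1_range s) as Hs'. fold s' in Hs'.
  assert (Hs : s = s' + IZR (Int_part s)) by apply frac1_decomp.
  set (j := (Int_part ((1 - s') / b) + 1)%Z).
  assert (Hj : IZR j - 1 <= (1 - s') / b < IZR j).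
  { pose proof (base_Int_part ((1 - s') / b)). unfold j. rewrite plus_IZR. simpl. lra. }
  assert (Hj1 : (IZR j - 1) * b <= 1 - s').
  { destruct Hj as [Hj _]. apply (Rmult_le_compat_r b) in Hj; [|lra].
    unfold Rdiv in Hj. rewrite Rmult_assoc, Rinv_l, Rmult_1_r in Hj by lra. lra. }
  assert (Hj2 : 1 - s' < IZR j * b).
  { destruct Hj as [_ Hj]. apply (Rmult_lt_compat_r b) in Hj; [|lra].
    unfold Rdiv in Hj. rewrite Rmult_assoc, Rinv_l, Rmult_1_r in Hj by lra. lra. }
  exists (j * k)%Z.
  rewrite (frac1_int _ (s' + IZR j * b - 1) (Int_part s + j * Int_part (IZR k * a) + 1)).
  - rewrite frac1_small by lra. lra.
  - rewrite !plus_IZR, !mult_IZR. simpl.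
    replace (IZR j * IZR k * a) with (IZR j * (IZR k * a)) by ring.
    rewrite Hki at 1. rewrite Hs at 1. ring.
Qed.

Lemma irrational_opp a : irrational a -> irrational (- a).
Proof.
  intros Ha [m [k [Hk E]]]. apply Ha. exists m, (- k)%Z. split; [lia|].
  rewrite opp_IZR. lra.
Qed.

Lemma dens_left a : irrational a -> forall eps s, 0 < eps ->
  exists k, 1 - eps < frac1 (s + IZR k * a) < 1.
Proof.
  intros Ha eps s Heps.
  destruct (dens_right (- a) (irrational_opp a Ha) eps (- s) Heps) as [k Hk].
  exists k. set (u := frac1 (- s + IZR k * - a)) in *.
  pose proof (frac1_range (- s + IZR k * - a)) as Hu. fold u in Hu.
  assert (Hd : - s + IZR k * - a = u + IZR (Int_part (- s + IZR k * - a))) by apply frac1_decomp.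
  rewrite (frac1_int _ (1 - u) (- Int_part (- s + IZR k * - a) - 1)).
  - rewrite frac1_small by lra. lra.
  - rewrite minus_IZR, opp_IZR. simpl. lra.
Qed.


Definition fv (a y : R) : R := if Rle_dec (1 - a) y then (if Rlt_dec y 1 then 1 else 0) else 0.
Definition fvt (a y : R) : R :=
  if Rlt_dec (1 - a) y then (if Rle_dec y 1 then 1 else 0)
  else if Req_EM_T y 0 then 1 else 0.

Lemma loc_right a y : 0 < a < 1 -> 0 <= y < 1 -> exists eps, 0 < eps /\
  forall d, 0 < d < eps -> fv a (frac1 (y + d)) = fv a y /\ fvt a (frac1 (y + d)) = fv a y.
Proof.
  intros Ha Hy. destruct (Rle_dec (1 - a) y) as [h|h].
  - exists (1 - y). split; [lra|]. intros d Hd. rewrite frac1_small by lra.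
    unfold fv, fvt. repeat (destruct Rle_dec; try lra); repeat (destruct Rlt_dec; try lra);
      repeat (destruct Req_EM_T; try lra); split; lra.
  - exists (1 - a - y). split; [lra|]. intros d Hd. rewrite frac1_small by lra.
    unfold fv, fvt. repeat (destruct Rle_dec; try lra); repeat (destruct Rlt_dec; try lra);
      repeat (destruct Req_EM_T; try lra); split; lra.
Qed.

Lemma loc_left a y : 0 < a < 1 -> 0 <= y < 1 -> exists eps, 0 < eps /\
  forall d, 1 - eps < d < 1 -> fv a (frac1 (y + d)) = fvt a y /\ fvt a (frac1 (y + d)) = fvt a y.
Proof.
  intros Ha Hy. destruct (Req_dec y 0) as [->|Hy0].
  - exists a. split; [lra|]. intros d Hd. rewrite Rplus_0_l, frac1_small by lra.
    unfold fv, fvt. repeat (destruct Rle_dec; try lra); repeat (destruct Rlt_dec; try lra);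
      repeat (destruct Req_EM_T; try lra); split; lra.
  - destruct (Rle_dec y (1 - a)) as [h|h].
    + exists y. split; [lra|]. intros d Hd. rewrite (frac1_unique _ 1) by (simpl; lra). simpl.
      unfold fv, fvt. repeat (destruct Rle_dec; try lra); repeat (destruct Rlt_dec; try lra);
        repeat (destruct Req_EM_T; try lra); split; lra.
    + exists (y - (1 - a)). split; [lra|]. intros d Hd. rewrite (frac1_unique _ 1) by (simpl; lra). simpl.
      unfold fv, fvt. repeat (destruct Rle_dec; try lra); repeat (destruct Rlt_dec; try lra);
        repeat (destruct Req_EM_T; try lra); split; lra.
Qed.

Lemma window (P : Z -> R -> Prop) :
  (forall n, exists eps, 0 < eps /\ forall d, 0 < d < eps -> P n d) ->
  forall r : nat, exists eps, 0 < eps /\ forall n, (Z.abs n <= Z.of_nat r)%Z -> forall d, 0 < d < eps -> P n d.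
Proof.
  intros H r. induction r.
  - destruct (H 0%Z) as [e [He H0]]. exists e. split; auto. intros n Hn d Hd.
    assert (n = 0%Z) by lia. subst; auto.
  - destruct IHr as [e [He H0]].
    destruct (H (Z.of_nat (S r))) as [e1 [He1 H1]].
    destruct (H (- Z.of_nat (S r))%Z) as [e2 [He2 H2]].
    exists (Rmin e (Rmin e1 e2)). split; [repeat apply Rmin_pos; auto|].
    intros n Hn d Hd.
    pose proof (Rmin_l e (Rmin e1 e2)). pose proof (Rmin_r e (Rmin e1 e2)).
    pose proof (Rmin_l e1 e2). pose proof (Rmin_r e1 e2).
    destruct (Z_le_gt_dec (Z.abs n) (Z.of_nat r)) as [h|h].
    + apply H0; auto; lra.
    + assert (n = Z.of_nat (S r) \/ n = (- Z.of_nat (S r))%Z) as [->| ->] by lia.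
      * apply H1; lra.
      * apply H2; lra.
Qed.

Lemma approx_right a t t' (F Gt : R -> R) : irrational a ->
  (forall y, 0 <= y < 1 -> exists eps, 0 < eps /\ forall d, 0 < d < eps -> F (frac1 (y + d)) = Gt y) ->
  Happ (fun n => F (frac1 (IZR n * a + t))) (fun n => Gt (frac1 (IZR n * a + t'))).
Proof.
  intros Ha Hloc r.
  destruct (window (fun n d => F (frac1 (frac1 (IZR n * a + t') + d)) = Gt (frac1 (IZR n * a + t'))))
    with (r := r) as [e [He Hw]].
  { intros n. apply Hloc, frac1_range. }
  destruct (dens_right a Ha e (t - t') He) as [k Hk].
  exists k. intros n Hn. rewrite <- (Hw n Hn _ Hk). f_equal.
  apply (frac1_int _ _ (Int_part (IZR n * a + t') + Int_part (t - t' + IZR k * a))).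
  rewrite plus_IZR, plus_IZR. unfold frac1. ring.
Qed.

Lemma approx_left a t t' (F Gt : R -> R) : irrational a ->
  (forall y, 0 <= y < 1 -> exists eps, 0 < eps /\ forall d, 1 - eps < d < 1 -> F (frac1 (y + d)) = Gt y) ->
  Happ (fun n => F (frac1 (IZR n * a + t))) (fun n => Gt (frac1 (IZR n * a + t'))).
Proof.
  intros Ha Hloc r.
  destruct (window (fun n d => F (frac1 (frac1 (IZR n * a + t') + (1 - d))) = Gt (frac1 (IZR n * a + t'))))
    with (r := r) as [e [He Hw]].
  { intros n. destruct (Hloc _ (frac1_range (IZR n * a + t'))) as [e [He H]].
    exists e; split; auto. intros d Hd. apply H. lra. }
  destruct (dens_left a Ha e (t - t') He) as [k Hk].
  exists k. intros n Hn.
  rewrite <- (Hw n Hn (1 - frac1 (t - t' + IZR k * a)) ltac:(lra)). f_equal.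
  apply (frac1_int _ _ (Int_part (IZR n * a + t') + Int_part (t - t' + IZR k * a))).
  rewrite plus_IZR, plus_IZR. unfold frac1. ring.
Qed.


Lemma fv01 a y : fv a y = 0 \/ fv a y = 1.
Proof. unfold fv. repeat destruct Rle_dec; repeat destruct Rlt_dec; auto. Qed.
Lemma fvt01 a y : fvt a y = 0 \/ fvt a y = 1.
Proof. unfold fvt. repeat destruct Rle_dec; repeat destruct Rlt_dec; repeat destruct Req_EM_T; auto. Qed.

Lemma bnd01 lam x : (x = 0 \/ x = 1) -> Rabs (lam * x) <= Rabs lam.
Proof. intros [-> | ->]; [rewrite Rmult_0_r, Rabs_R0; apply Rabs_pos| rewrite Rmult_1_r; lra]. Qed.

Lemma v_bnd lam a t n : Rabs (lam * v a t n) <= Rabs lam.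
Proof. apply bnd01. apply (fv01 a (frac1 (IZR n * a + t))). Qed.
Lemma vt_bnd lam a t n : Rabs (lam * vt a t n) <= Rabs lam.
Proof. apply bnd01. apply (fvt01 a (frac1 (IZR n * a + t))). Qed.


Lemma vv (p : Rbar) (a lam : R) (z : C) (hp : Rbar_le (Finite 1) p) (Ha : 0 < a < 1) (Hirr : irrational a) t t' : ~ spectrum p (H lam a t) z -> ~ spectrum p (H lam a t') z.
Proof.
  apply (main_lemma p lam z (v a t) (v a t') (Rabs lam) hp (Rabs_pos _) (v_bnd lam a t')).
  apply (approx_right a t t' (fv a) (fv a) Hirr).
  intros y Hy. destruct (loc_right a y Ha Hy) as [e [He H1]]. exists e; split; auto.
  intros d Hd; apply H1; auto.
Qed.

Lemma tv (p : Rbar) (a lam : R) (z : C) (hp : Rbar_le (Finite 1) p) (Ha : 0 < a < 1) (Hirr : irrational a) t t' : ~ spectrum p (Ht lam a t) z -> ~ spectrum p (H lam a t') z.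
Proof.
  apply (main_lemma p lam z (vt a t) (v a t') (Rabs lam) hp (Rabs_pos _) (v_bnd lam a t')).
  apply (approx_right a t t' (fvt a) (fv a) Hirr).
  intros y Hy. destruct (loc_right a y Ha Hy) as [e [He H1]]. exists e; split; auto.
  intros d Hd; apply H1; auto.
Qed.

Lemma vt' (p : Rbar) (a lam : R) (z : C) (hp : Rbar_le (Finite 1) p) (Ha : 0 < a < 1) (Hirr : irrational a) t t' : ~ spectrum p (H lam a t) z -> ~ spectrum p (Ht lam a t') z.
Proof.
  apply (main_lemma p lam z (v a t) (vt a t') (Rabs lam) hp (Rabs_pos _) (vt_bnd lam a t')).
  apply (approx_left a t t' (fv a) (fvt a) Hirr).
  intros y Hy. destruct (loc_left a y Ha Hy) as [e [He H1]]. exists e; split; auto.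
  intros d Hd; apply H1; auto.
Qed.

Lemma tt (p : Rbar) (a lam : R) (z : C) (hp : Rbar_le (Finite 1) p) (Ha : 0 < a < 1) (Hirr : irrational a) t t' : ~ spectrum p (Ht lam a t) z -> ~ spectrum p (Ht lam a t') z.
Proof.
  apply (main_lemma p lam z (vt a t) (vt a t') (Rabs lam) hp (Rabs_pos _) (vt_bnd lam a t')).
  apply (approx_left a t t' (fvt a) (fvt a) Hirr).
  intros y Hy. destruct (loc_left a y Ha Hy) as [e [He H1]]. exists e; split; auto.
  intros d Hd; apply H1; auto.
Qed.

Lemma contra (A B : Prop) : (~ B -> ~ A) -> A -> B.
Proof. intros H HA. apply Classical_Prop.NNPP. intros HB. exact (H HB HA). Qed.

Theorem proposition5p2 (p : Rbar) (alpha theta lambda : R) :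
  Rbar_le (Finite 1) p ->
  0 <= alpha <= 1 -> irrational alpha ->
  0 <= theta < 1 ->
  forall z : Coquelicot.Complex.C,
    (spectrum p (H lambda alpha 0) z <-> spectrum p (Ht lambda alpha theta) z) /\
    (spectrum p (Ht lambda alpha theta) z <-> spectrum p (H lambda alpha theta) z).
Proof.
  intros hp Ha Hirr Hth z.
  assert (Ha' : 0 < alpha < 1).
  { split.
    - destruct (Req_dec alpha 0) as [E|E]; [|lra]. exfalso. apply Hirr. exists 0%Z, 1%Z.
      split; [lia|]. rewrite E; simpl; ring.
    - destruct (Req_dec alpha 1) as [E|E]; [|lra]. exfalso. apply Hirr. exists 1%Z, 1%Z.
      split; [lia|]. rewrite E; simpl; ring. }
  split; split; apply contra.
  - apply (tv p alpha lambda z hp Ha' Hirr).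
  - apply (vt' p alpha lambda z hp Ha' Hirr).
  - apply (vt' p alpha lambda z hp Ha' Hirr).
  - apply (tv p alpha lambda z hp Ha' Hirr).
Qed.
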